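(* Let $R$ be a multiplication ring with finitely many minimal prime ideals. Then an $R$-module $M$ is faithful, Noetherian and distributive if and only if $M$ is a faithful multiplication $R$-module.
   Context: All rings are commutative with $1$ and all modules are unital. A ring $R$ is a multiplication ring if whenever $I,J$ are ideals of $R$ with $J\subseteq I$, there is an ideal $I'$ of $R$ with $J=I'I$. An $R$-module $M$ is a multiplication module if every submodule of $M$ equals $IM$ for some ideal $I$ of $R$. A submodule $N$ of $M$ is distributive if $(M_1+M_2)\cap N=M_1\cap N+M_2\cap N$ for all submodules $M_1,M_2$ of $M$; $M$ is distributive if all its submodules are distributive. $M$ is faithful if $\mathrm{ann}_R(M)=0$. *)

(* Defs.v *)
From HB Require Import structures.
From mathcomp Require Import all_boot all_order all_algebra.
Set Implicit Arguments. Unset Strict Implicit. Unset Printing Implicit Defensive.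
Import GRing.Theory.
Local Open Scope ring_scope.

Section Defs.
Variable R : comPzRingType.

Definition is_ideal (I : R -> Prop) : Prop :=
  I 0 /\ (forall a b, I a -> I b -> I (a + b)) /\ (forall r a, I a -> I (r * a)).

Definition same {T : Type} (A B : T -> Prop) : Prop := forall x, A x <-> B x.
Definition incl {T : Type} (A B : T -> Prop) : Prop := forall x, A x -> B x.

Definition ideal_mul (I J : R -> Prop) : R -> Prop := fun x =>
  exists s : seq (R * R), (forall p, p \in s -> I p.1 /\ J p.2) /\
    x = \sum_(p <- s) p.1 * p.2.

Definition multiplication_ring : Prop :=
  forall I J, is_ideal I -> is_ideal J -> incl J I ->
    exists I', is_ideal I' /\ same J (ideal_mul I' I).

Definition prime_ideal (P : R -> Prop) : Prop :=
  is_ideal P /\ ~ P 1 /\ (forall a b, P (a * b) -> P a \/ P b).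

Definition minimal_prime (P : R -> Prop) : Prop :=
  prime_ideal P /\ (forall Q, prime_ideal Q -> incl Q P -> incl P Q).

Definition finitely_many_minimal_primes : Prop :=
  exists (n : nat) (Q : nat -> R -> Prop),
    forall P, minimal_prime P -> exists2 i, (i < n)%N & same P (Q i).

Variable M : lmodType R.

Definition is_submod (N : M -> Prop) : Prop :=
  N 0 /\ (forall a b, N a -> N b -> N (a + b)) /\ (forall r m, N m -> N (r *: m)).

Definition ideal_smul (I : R -> Prop) : M -> Prop := fun x =>
  exists s : seq (R * M), (forall p, p \in s -> I p.1) /\
    x = \sum_(p <- s) p.1 *: p.2.

Definition multiplication_module : Prop :=
  forall N, is_submod N -> exists I, is_ideal I /\ same N (ideal_smul I).

Definition faithful_mod : Prop := forall r : R, (forall m : M, r *: m = 0) -> r = 0.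

Definition noetherian_mod : Prop :=
  forall N : nat -> M -> Prop, (forall n, is_submod (N n)) ->
    (forall n, incl (N n) (N n.+1)) ->
    exists k, forall n, (k <= n)%N -> same (N n) (N k).

Definition sum_sub (A B : M -> Prop) : M -> Prop :=
  fun x => exists a b, A a /\ B b /\ x = a + b.
Definition cap_sub (A B : M -> Prop) : M -> Prop := fun x => A x /\ B x.

Definition distributive_submod (N : M -> Prop) : Prop :=
  forall M1 M2, is_submod M1 -> is_submod M2 ->
    same (cap_sub (sum_sub M1 M2) N) (sum_sub (cap_sub M1 N) (cap_sub M2 N)).

Definition distributive_mod : Prop :=
  forall N, is_submod N -> distributive_submod N.
End Defs.

(* Main.v *)
Require Import Defs.
From mathcomp Require Import all_boot all_order all_algebra.
From mathcomp Require Import ring.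
From mathcomp Require classical_sets.
From Stdlib Require Import Classical ClassicalEpsilon.
Set Implicit Arguments. Unset Strict Implicit. Unset Printing Implicit Defensive.
Import GRing.Theory.
Local Open Scope ring_scope.

Lemma zorn_gen (T : Type) (P : (T -> Prop) -> Prop) (A0 : T -> Prop) (x0 : T) :
  A0 x0 -> P A0 ->
  (forall F : (T -> Prop) -> Prop, (forall A, F A -> P A /\ (forall x, A0 x -> A x)) ->
     (exists A, F A) -> (forall A B, F A -> F B -> (forall x, A x -> B x) \/ (forall x, B x -> A x)) ->
     P (fun x => exists2 A, F A & A x)) ->
  exists A, P A /\ (forall x, A0 x -> A x) /\
    forall B, P B -> (forall x, A x -> B x) -> forall x, B x -> A x.
Proof.
move=> H0 HP Hch.
pose P' := fun A : T -> Prop => (forall x, ~ A x) \/ (P A /\ (forall x, A0 x -> A x)).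
have [A [PA Amax]] : exists A, P' A /\ forall B, classical_sets.proper A B -> ~ P' B.
  apply: classical_sets.Zorn_bigcup => F FP Ftot.
  case: (classic (exists A, F A /\ exists x, A x)) => [[A [FA [x Ax]]]|Hno].
  - right.
    pose F' := fun A => F A /\ exists x, A x.
    have E : forall y, (exists2 X, F X & X y) <-> (exists2 X, F' X & X y).
      move=> y; split; move=> [X FX Xy]; last by exists X => //; case: FX.
      by exists X => //; split => //; exists y.
    have HF' : forall A, F' A -> P A /\ (forall x, A0 x -> A x).
      move=> B [FB [y By]]; case: (FP B FB) => // /(_ y) //.
    have HU := Hch F' HF' (ex_intro _ A (conj FA (ex_intro _ x Ax)))
      (fun A B FA FB => Ftot A B (proj1 FA) (proj1 FB)).
    have -> : classical_sets.bigcup F (fun X => X) = (fun x => exists2 A, F' A & A x).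
      apply: boolp.funext => y; apply: boolp.propext; exact: E.
    split => // y Hy.
    apply: (@ex_intro2 _ _ _ A); first by split => //; exists x.
    by case: (HF' A (conj FA (ex_intro _ x Ax))) => _; apply.
  - left => y [X FX Xy]; apply: Hno; by exists X; split => //; exists y.
exists A; case: PA => [Aempty | [PA HA]].
  exfalso; apply: (Amax A0); last by right.
  split; first by move=> x /Aempty.
  by move=> /(_ x0 H0) /Aempty.
split => //; split => // B PB AB x Bx.
apply: NNPP => Ax; apply: (Amax B); last by right; split => // y /HA /AB.
by split => // /(_ x Bx).
Qed.

Section Mod.
Variable R : comPzRingType.
Variable M : lmodType R.

Definition cyc (x : M) : M -> Prop := fun z => exists r : R, z = r *: x.

Lemma cyc_submod x : is_submod (cyc x).
Proof.
split; first by exists 0; rewrite scale0r.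
split.
- by move=> a b [r ->] [s ->]; exists (r + s); rewrite scalerDl.
- by move=> r m [s ->]; exists (r * s); rewrite scalerA.
Qed.

Lemma cyc_self x : cyc x x. Proof. by exists 1; rewrite scale1r. Qed.

Lemma sum_closed (P : M -> Prop) (I : eqType) (s : seq I) (F : I -> M) :
  P 0 -> (forall a b, P a -> P b -> P (a + b)) ->
  (forall i, i \in s -> P (F i)) -> P (\sum_(i <- s) F i).
Proof.
move=> P0 Pa; elim: s => [|x s IH] H; first by rewrite big_nil.
rewrite big_cons; apply: Pa; first by apply: (H); rewrite mem_head.
by apply: IH => i Hi; apply: (H); rewrite in_cons Hi orbT.
Qed.

Lemma steph (D : distributive_mod M) x y :
  exists a b : R, a + b = 1 /\ cyc x (a *: y) /\ cyc y (b *: x).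
Proof.
have [H _] := D (cyc y) (cyc_submod y) (cyc x) (cyc (y - x))
  (cyc_submod x) (cyc_submod (y - x)) y.
have [u [v [[[r1 Hu1] _] [[[s Hv1] [r3 Hv2]] Huv]]]] :
  sum_sub (cap_sub (cyc x) (cyc y)) (cap_sub (cyc (y - x)) (cyc y)) y.
  apply: (H); split; last exact: (cyc_self y).
  exists x, (y - x); split; first exact: cyc_self.
  by split; [exact: cyc_self | rewrite addrC subrK].
exists (1 - s), s; split; first by rewrite subrK.
split.
- exists (r1 - s).
  have E : y = r1 *: x + (s *: y - s *: x) by rewrite -scalerBr -Hv1 -Hu1.
  rewrite scalerBl scale1r scalerBl {1}E.
  by rewrite addrCA [LHS]addrC addKr.
- exists (s - r3).
  by rewrite scalerBl -Hv2 Hv1 scalerBr opprB addrC subrK.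
Qed.

Fixpoint lspan (l : seq M) : M -> Prop :=
  match l with
  | [::] => fun m => m = 0
  | x :: l' => fun m => exists r : R, lspan l' (m - r *: x)
  end.

Lemma lspan_submod l : is_submod (lspan l).
Proof.
elim: l => [|x l [H0 [Ha Hs]]] /=.
  split => //; split; first by move=> a b -> ->; rewrite addr0.
  by move=> r m ->; rewrite scaler0.
split; first by exists 0; rewrite scale0r subr0.
split.
- move=> a b [r Hr] [s Hs']; exists (r + s).
  have -> : a + b - (r + s) *: x = (a - r *: x) + (b - s *: x).
    by rewrite scalerDl opprD addrACA.
  exact: Ha.
- move=> r m [s Hm]; exists (r * s).
  by rewrite -scalerA -scalerBr; apply: Hs.
Qed.

Lemma lspan_cons l y m : lspan l m -> lspan (y :: l) m.
Proof. by move=> H; exists 0; rewrite scale0r subr0. Qed.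

Lemma lspan_head l y : lspan (y :: l) y.
Proof. by exists 1; rewrite scale1r subrr; case: (lspan_submod l). Qed.

Definition goodp (l : seq M) (p : R * M) :=
  lspan l p.2 /\ forall m, lspan l m -> cyc p.2 (p.1 *: m).

Hypothesis ST : forall x y : M, exists a b : R,
  a + b = 1 /\ cyc x (a *: y) /\ cyc y (b *: x).

Lemma step y l (qs : seq (R * M)) : (forall p, p \in qs -> goodp l p) ->
  exists (qs' : seq (R * M)) (f : R),
   \sum_(p <- qs') p.1 + f = \sum_(p <- qs) p.1 /\
   (forall p, p \in qs' -> goodp (y :: l) p) /\
   (forall m, lspan (y :: l) m -> cyc y (f *: m)).
Proof.
elim: qs => [|[e x] qs IH] H.
  exists [::], 0; split; first by rewrite !big_nil addr0.
  by split => // m _; exists 0; rewrite !scale0r.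
have [qs' [f [Hs [Hg Hf]]]] :
    exists (qs' : seq (R * M)) (f : R),
   \sum_(p <- qs') p.1 + f = \sum_(p <- qs) p.1 /\
   (forall p, p \in qs' -> goodp (y :: l) p) /\
   (forall m, lspan (y :: l) m -> cyc y (f *: m)).
  by apply: IH => p Hp; apply: (H); rewrite in_cons Hp orbT.
have [Hx He] : goodp l (e, x) by apply: (H); rewrite mem_head.
have [a [b [Hab [[c Hc] [c' Hc']]]]] := ST x y.
have [Cx0 [Cxa Cxs]] := cyc_submod x.
have [Cy0 [Cya Cys]] := cyc_submod y.
exists ((e * a, x) :: qs'), (f + e * b); split.
  rewrite !big_cons /= -Hs.
  move: (\sum_(p <- qs') p.1) => S.
  have E : e = e * (a + b) by rewrite Hab mulr1.
  rewrite [in RHS]E; ring.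
split.
  move=> p; rewrite in_cons => /orP [/eqP -> | Hp]; last exact: Hg.
  split; first exact: lspan_cons.
  move=> m /= [r Hr].
  have -> : m = (m - r *: y) + r *: y by rewrite subrK.
  rewrite scalerDr; apply: (Cxa).
    by rewrite mulrC -scalerA; apply: (Cxs); apply: (He).
  have -> : (e * a) *: (r *: y) = r *: (e *: (a *: y)).
    by rewrite !scalerA; congr (_ *: _); ring.
  apply: (Cxs); rewrite Hc scalerA mulrC -scalerA.
  apply: (Cxs); apply: (He); exact: Hx.
move=> m Hm; rewrite scalerDl; apply: (Cya); first exact: Hf.
case: Hm => r Hr.
have -> : m = (m - r *: y) + r *: y by rewrite subrK.
rewrite scalerDr; apply: (Cya); last by exists (e * b * r); rewrite scalerA.
have [d Hd] := He _ Hr.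
rewrite mulrC -scalerA Hd scalerA mulrC -scalerA Hc'.
by apply: (Cys); apply: (Cys); exact: cyc_self.
Qed.

Lemma part_unity l : exists ps : seq (R * M),
  \sum_(p <- ps) p.1 = 1 /\ forall p, p \in ps -> goodp l p.
Proof.
elim: l => [|y l [ps [H1 H2]]].
  exists [:: (1, 0)]; split; first by rewrite big_seq1.
  move=> p; rewrite mem_seq1 => /eqP -> /=; split => // m ->.
  by exists 0; rewrite !scaler0.
have [qs' [f [Hs [Hg Hf]]]] := step y H2.
exists ((f, y) :: qs'); split; first by rewrite big_cons /= addrC Hs.
move=> p; rewrite in_cons => /orP [/eqP -> | Hp]; last exact: Hg.
by split; [exact: lspan_head | exact: Hf].
Qed.

End Mod.

Section Mod2.
Variable R : comPzRingType.
Variable M : lmodType R.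

Definition colon (N : M -> Prop) : R -> Prop := fun r => forall m, N (r *: m).

Lemma colon_ideal N : is_submod N -> is_ideal (colon N).
Proof.
move=> [N0 [Na Ns]]; split; first by move=> m; rewrite scale0r.
split; first by move=> a b Ha Hb m; rewrite scalerDl; apply: (Na).
by move=> r a Ha m; rewrite -scalerA; apply: (Ns).
Qed.

Lemma ideal_smul_add (I : R -> Prop) a b :
  ideal_smul I a -> ideal_smul I b -> @ideal_smul R M I (a + b).
Proof.
move=> [s [Hs ->]] [t [Ht ->]]; exists (s ++ t); split; last by rewrite big_cat.
by move=> p; rewrite mem_cat => /orP [/Hs | /Ht].
Qed.

Lemma ideal_smul0 (I : R -> Prop) : @ideal_smul R M I 0.
Proof. by exists [::]; split => //; rewrite big_nil. Qed.

Lemma ideal_smul1 (I : R -> Prop) r (m : M) : I r -> ideal_smul I (r *: m).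
Proof.
move=> Hr; exists [:: (r, m)]; split; last by rewrite big_seq1.
by move=> p; rewrite mem_seq1 => /eqP ->.
Qed.

Lemma ideal_smul_sub N (I : R -> Prop) : is_submod N ->
  (forall r, I r -> colon N r) -> forall m, @ideal_smul R M I m -> N m.
Proof.
move=> [N0 [Na Ns]] HI m [s [Hs ->]].
apply: sum_closed => // p /Hs Hp; exact: HI.
Qed.

Lemma mult_sub_colon N I : is_submod N -> same N (@ideal_smul R M I) ->
  forall r, I r -> colon N r.
Proof. by move=> _ H r Hr m; apply/H; apply: ideal_smul1. Qed.

Lemma noeth_fg : noetherian_mod M -> exists l, forall m : M, lspan l m.
Proof.
move=> Hn; apply: NNPP => Hno.
have F : forall l : seq M, {m | ~ lspan l m}.
  move=> l; apply: constructive_indefinite_description.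
  by apply: not_all_ex_not => H; apply: (Hno); exists l.
pose fix ch n : seq M := if n is n'.+1 then sval (F (ch n')) :: ch n' else [::].
have [k Hk] := Hn (fun n => lspan (ch n)) (fun n => lspan_submod (ch n))
   (fun n m Hm => lspan_cons (sval (F (ch n))) Hm).
have := proj1 (Hk k.+1 (leqnSn k) _) (lspan_head _ _).
by case: (F (ch k)).
Qed.

Lemma steph_mult (ST : forall x y : M, exists a b : R,
  a + b = 1 /\ cyc x (a *: y) /\ cyc y (b *: x)) :
  (exists l, forall m : M, lspan l m) -> multiplication_module M.
Proof.
move=> [l Hl] N HN.
have [N0 [Na Ns]] := HN.
exists (colon N); split; first exact: colon_ideal.
move=> m; split; last by apply: ideal_smul_sub => //.
move=> Hm.
have [ps [H1 H2]] := part_unity ST l.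
have -> : m = \sum_(p <- ps) (p.1 *: m) by rewrite -scaler_suml H1 scale1r.
apply: sum_closed; [exact: ideal_smul0 | exact: ideal_smul_add |].
move=> [e x] /H2 [Hx He] /=.
have [c [d [Hcd [[c1 Hc] [t Ht]]]]] := ST m x.
have -> : e *: m = (c * e) *: m + (e * t) *: x.
  rewrite -[(e * t) *: x]scalerA -Ht scalerA -scalerDl; congr (_ *: _).
  rewrite -{1}[e]mulr1 -Hcd; ring.
apply: ideal_smul_add; apply: ideal_smul1 => m'.
  have [r Hr] := He m' (Hl m').
  by rewrite -scalerA Hr scalerA mulrC -scalerA Hc scalerA; apply: (Ns).
have [r Hr] := He m' (Hl m').
rewrite mulrC -scalerA Hr scalerA mulrC -scalerA -Ht.
by apply: (Ns); apply: (Ns).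
Qed.

Lemma steph_distr (ST : forall x y : M, exists a b : R,
  a + b = 1 /\ cyc x (a *: y) /\ cyc y (b *: x)) : distributive_mod M.
Proof.
move=> N [N0 [Na Ns]] M1 M2 [_ [M1a M1s]] [_ [M2a M2s]] x; split.
  move=> [H Hx]; case: H => a [b [Ha [Hb Ex]]]; rewrite Ex in Hx *.
  have [s [t [Hst [[r Hr] [r' Hr']]]]] := ST a b.
  exists (s *: (a + b)), (t *: (a + b)).
  split; [split|split; [split|]].
  - by rewrite scalerDr Hr; apply: (M1a); apply: (M1s).
  - by apply: (Ns).
  - by rewrite scalerDr Hr'; apply: (M2a); apply: (M2s).
  - by apply: (Ns).
  - by rewrite -scalerDl Hst scale1r.
move=> [u [v [[Hu1 Hu2] [[Hv1 Hv2] ->]]]]; split; last exact: Na.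
by exists u, v.
Qed.

End Mod2.

Section Ring.
Variable R : comPzRingType.
Hypothesis MR : multiplication_ring R.

Lemma ideal_sum_seq (I : R -> Prop) (T : eqType) (s : seq T) (F : T -> R) :
  is_ideal I -> (forall i, i \in s -> I (F i)) -> I (\sum_(i <- s) F i).
Proof.
move=> [I0 [Ia _]]; elim: s => [|x s IH] H; first by rewrite big_nil.
rewrite big_cons; apply: Ia; first by apply: H; rewrite mem_head.
by apply: IH => i Hi; apply: H; rewrite in_cons Hi orbT.
Qed.

Lemma L1 (a b : R) : exists p, (exists u, p * b = u * a) /\ (exists v, (1 - p) * a = v * b).
Proof.
pose I := fun z : R => exists u v, z = u * a + v * b.
pose J := fun z : R => exists u, z = u * a.
have HI : is_ideal I.
  split; first by exists 0, 0; rewrite !mul0r addr0.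
  split; first by move=> x y [u [v ->]] [u' [v' ->]]; exists (u + u'), (v + v'); ring.
  by move=> r x [u [v ->]]; exists (r * u), (r * v); ring.
have HJ : is_ideal J.
  split; first by exists 0; rewrite mul0r.
  split; first by move=> x y [u ->] [u' ->]; exists (u + u'); ring.
  by move=> r x [u ->]; exists (r * u); ring.
have [I' [HI' HS]] := MR HI HJ (fun z => fun '(ex_intro u Hu) => ex_intro _ u (ex_intro _ 0 (etrans Hu (esym (etrans (congr1 _ (mul0r b)) (addr0 _)))))).
have [s [Hs Ea]] : ideal_mul I' I a by apply/HS; exists 1; rewrite mul1r.
have [P [Q [HP EPQ]]] : exists P Q, I' P /\ \sum_(p <- s) p.1 * p.2 = P * a + Q * b.
  have [I'0 [I'a I'm]] := HI'.
  elim: s Hs {Ea} => [|x s IH] H.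
    by exists 0, 0; split; [exact: I'0 | rewrite big_nil !mul0r addr0].
  have [P [Q [HP E]]] : exists P Q, I' P /\ \sum_(p <- s) p.1 * p.2 = P * a + Q * b.
    by apply: IH => p Hp; apply: H; rewrite in_cons Hp orbT.
  have [Hx1 [u [v Hx2]]] : I' x.1 /\ I x.2 by apply: H; rewrite mem_head.
  exists (x.1 * u + P), (x.1 * v + Q); split.
    by apply: (I'a); [rewrite mulrC; exact: I'm | exact: HP].
  by rewrite big_cons E Hx2; ring.
exists P; split.
  apply/HS; exists [:: (P, b)]; split; last by rewrite big_seq1.
  move=> p; rewrite mem_seq1 => /eqP -> /=; split => //.
  by exists 0, 1; rewrite mul0r mul1r add0r.
by exists Q; rewrite mulrBl mul1r {1}Ea EPQ; ring.
Qed.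

Lemma arith_one (A B : R -> Prop) a (bs : seq R) : is_ideal A -> is_ideal B ->
  A a -> (forall b, b \in bs -> B b) ->
  exists s, (forall b, b \in bs -> A (s * b)) /\ B ((1 - s) * a).
Proof.
move=> [A0 [Aa Am]] [B0 [Ba Bm]] Ha; elim: bs => [|b bs IH] H.
  by exists 1; split => //; rewrite subrr mul0r.
have [s [Hs1 Hs2]] : exists s, (forall b, b \in bs -> A (s * b)) /\ B ((1 - s) * a).
  by apply: IH => x Hx; apply: H; rewrite in_cons Hx orbT.
have [p [[u Hu] [v Hv]]] := L1 a b.
exists (p * s); split.
  move=> x; rewrite in_cons => /orP [/eqP -> | Hx].
    by rewrite mulrAC Hu mulrC mulrA; apply: (Am).
  by rewrite -mulrA; apply: (Am); apply: Hs1.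
have -> : (1 - p * s) * a = (1 - p) * a + p * ((1 - s) * a) by ring.
apply: (Ba); last by apply: (Bm).
by rewrite Hv; apply: (Bm); apply: H; rewrite mem_head.
Qed.

Lemma arith_many (A B : R -> Prop) (asq bs : seq R) : is_ideal A -> is_ideal B ->
  (forall a, a \in asq -> A a) -> (forall b, b \in bs -> B b) ->
  exists t, (forall b, b \in bs -> A (t * b)) /\ (forall a, a \in asq -> B ((1 - t) * a)).
Proof.
move=> HA HB; have [A0 [Aa Am]] := HA; have [B0 [Ba Bm]] := HB.
elim: asq => [|a asq IH] Has Hbs.
  by exists 0; split => // b _; rewrite mul0r.
have [t [Ht1 Ht2]] : exists t, (forall b, b \in bs -> A (t * b)) /\ (forall a, a \in asq -> B ((1 - t) * a)).
  by apply: IH => // x Hx; apply: Has; rewrite in_cons Hx orbT.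
have [s [Hs1 Hs2]] := arith_one HA HB (Has a (mem_head _ _)) Hbs.
exists (s + (1 - s) * t); split.
  move=> b Hb; rewrite mulrDl; apply: (Aa); first exact: Hs1.
  by rewrite -mulrA; apply: (Am); apply: Ht1.
have E : 1 - (s + (1 - s) * t) = (1 - s) * (1 - t) by ring.
move=> x; rewrite E in_cons => /orP [/eqP -> | Hx].
  by rewrite mulrAC mulrC; apply: (Bm).
by rewrite -mulrA; apply: (Bm); apply: Ht2.
Qed.

Variable M : lmodType R.

Lemma steph_of_mult : multiplication_module M -> forall x y : M, exists a b : R,
  a + b = 1 /\ cyc x (a *: y) /\ cyc y (b *: x).
Proof.
move=> MM x y.
have [I [HI HIx]] := MM _ (cyc_submod x).
have [J [HJ HJy]] := MM _ (cyc_submod y).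
have [s [Hs Ex]] : ideal_smul I x by apply/HIx; exact: cyc_self.
have [s' [Hs' Ey]] : ideal_smul J y by apply/HJy; exact: cyc_self.
have CA := colon_ideal (cyc_submod x).
have CB := colon_ideal (cyc_submod y).
have SA := mult_sub_colon (cyc_submod x) HIx.
have SB := mult_sub_colon (cyc_submod y) HJy.
have [t [Ht1 Ht2]] := @arith_many _ _ (map fst s) (map fst s') CA CB
   (fun a Ha => match mapP Ha with ex_intro2 p Hp E => ltac:(rewrite E; apply: SA; exact: Hs) end)
   (fun b Hb => match mapP Hb with ex_intro2 p Hp E => ltac:(rewrite E; apply: SB; exact: Hs') end).
exists t, (1 - t); split; first by rewrite addrC subrK.
have [Cx0 [Cxa Cxs]] := cyc_submod x.
have [Cy0 [Cya Cys]] := cyc_submod y.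
split.
  rewrite Ey scaler_sumr; apply: sum_closed => // p Hp.
  rewrite scalerA; apply: (Ht1 p.1); exact: map_f.
rewrite Ex scaler_sumr; apply: sum_closed => // p Hp.
rewrite scalerA; apply: (Ht2 p.1); exact: map_f.
Qed.

End Ring.

Section RingTh.
Variable R : comPzRingType.

Definition princ (a : R) : R -> Prop := fun z => exists r, z = r * a.

Lemma princ_ideal a : is_ideal (princ a).
Proof.
split; first by exists 0; rewrite mul0r.
split; first by move=> x y [u ->] [v ->]; exists (u + v); rewrite mulrDl.
by move=> r x [u ->]; exists (r * u); rewrite mulrA.
Qed.

Lemma princ_self a : princ a a. Proof. by exists 1; rewrite mul1r. Qed.

Lemma zero_ideal : is_ideal (fun z : R => z = 0).
Proof.
split => //; split; first by move=> a b -> ->; rewrite addr0.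
by move=> r a ->; rewrite mulr0.
Qed.

Lemma idlN (I : R -> Prop) x : is_ideal I -> I x -> I (- x).
Proof. by move=> [_ [_ Im]] Hx; rewrite -mulN1r; apply: Im. Qed.

Lemma idlB (I : R -> Prop) x y : is_ideal I -> I x -> I y -> I (x - y).
Proof. move=> HI Hx Hy; have [_ [Ia _]] := HI; apply: Ia => //; exact: idlN. Qed.

Lemma idlMr (I : R -> Prop) x r : is_ideal I -> I x -> I (x * r).
Proof. by move=> [_ [_ Im]] Hx; rewrite mulrC; apply: Im. Qed.

Lemma idlM (I : R -> Prop) x r : is_ideal I -> I x -> I (r * x).
Proof. by move=> [_ [_ Im]] Hx; apply: Im. Qed.

Lemma idlD (I : R -> Prop) x y : is_ideal I -> I x -> I y -> I (x + y).
Proof. by move=> [_ [Ia _]]; apply: Ia. Qed.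

Lemma idl0 (I : R -> Prop) : is_ideal I -> I 0.
Proof. by case. Qed.

Fixpoint rspan (l : seq R) : R -> Prop :=
  match l with
  | [::] => fun z => z = 0
  | x :: l' => fun z => exists r, rspan l' (z - r * x)
  end.

Lemma rspan_ideal l : is_ideal (rspan l).
Proof.
elim: l => [|x l IH] /=; first exact: zero_ideal.
split; first by exists 0; rewrite mul0r subr0; exact: idl0.
split.
- move=> a b [r Hr] [s Hs]; exists (r + s).
  have -> : a + b - (r + s) * x = (a - r * x) + (b - s * x) by ring.
  exact: idlD.
- move=> r m [s Hm]; exists (r * s).
  have -> : r * m - r * s * x = r * (m - s * x) by ring.
  exact: idlM.
Qed.

Lemma rspan_cons l y z : rspan l z -> rspan (y :: l) z.
Proof. by move=> H; exists 0; rewrite mul0r subr0. Qed.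

Lemma rspan_head l y : rspan (y :: l) y.
Proof. by exists 1; rewrite mul1r subrr; apply: idl0; apply: rspan_ideal. Qed.

Lemma rspan_catl l1 l2 z : rspan l1 z -> rspan (l1 ++ l2) z.
Proof.
elim: l1 z => [|x l IH] z /=; last by move=> [r Hr]; exists r; apply: IH.
move=> ->; elim: l2 => [|y l2 IH2] //=; exists 0; rewrite mul0r subr0 //.
Qed.

Lemma rspan_catr l1 l2 z : rspan l2 z -> rspan (l1 ++ l2) z.
Proof. by elim: l1 => [|x l IH] //= H; exists 0; rewrite mul0r subr0; apply: IH. Qed.

Lemma rspan_sub (I : R -> Prop) l : is_ideal I -> (forall x, x \in l -> I x) ->
  forall z, rspan l z -> I z.
Proof.
move=> HI; elim: l => [|x l IH] Hl z /=; first by move=> ->; exact: idl0.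
move=> [r Hr]; have -> : z = (z - r * x) + r * x by rewrite subrK.
apply: idlD => //; last by apply: idlM => //; apply: Hl; rewrite mem_head.
by apply: IH => // y Hy; apply: Hl; rewrite in_cons Hy orbT.
Qed.

Lemma rspan1 a z : rspan [:: a] z <-> princ a z.
Proof.
split; first by move=> [r /= Hr]; exists r; apply/eqP; rewrite -subr_eq0 Hr.
by move=> [r ->]; exists r; rewrite /= subrr.
Qed.

Definition maximal (m : R -> Prop) :=
  is_ideal m /\ ~ m 1 /\ forall x, ~ m x -> exists r y, m y /\ 1 = r * x + y.

Lemma maximal_prime m : maximal m -> prime_ideal m.
Proof.
move=> [Hm [H1 Hx]]; split => //; split => // a b Hab.
apply: NNPP => /not_or_and [Ha Hb].
have [r [y [Hy Ey]]] := Hx a Ha; have [r' [y' [Hy' Ey']]] := Hx b Hb.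
apply: H1.
have -> : 1 = (r * a + y) * (r' * b + y') by rewrite -Ey -Ey' mulr1.
have -> : (r * a + y) * (r' * b + y') = (r * r') * (a * b) + (y * (r' * b + y') + r * a * y') by ring.
apply: idlD => //; first exact: idlM.
by apply: idlD => //; [apply: idlMr | apply: idlM].
Qed.

Lemma prime_notin_mul (P : R -> Prop) a b : prime_ideal P -> ~ P a -> ~ P b -> ~ P (a * b).
Proof. by move=> [_ [_ HP]] Ha Hb /HP [] . Qed.

Lemma prime_ext (P Q : R -> Prop) : same P Q -> prime_ideal P -> prime_ideal Q.
Proof.
move=> E [[P0 [Pa Pm]] [P1 Pp]]; split; last split.
- split; first exact/E.
  split; first by move=> a b /E Ha /E Hb; apply/E; apply: Pa.
  by move=> r a /E Ha; apply/E; apply: Pm.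
- by move=> /E.
- by move=> a b /E /Pp [] H; [left|right]; apply/E.
Qed.

Lemma zorn_avoid (I S : R -> Prop) : is_ideal I -> (forall z, I z -> ~ S z) ->
  exists A, is_ideal A /\ (forall z, I z -> A z) /\ (forall z, A z -> ~ S z) /\
    forall B, is_ideal B -> (forall z, B z -> ~ S z) -> (forall z, A z -> B z) ->
      forall z, B z -> A z.
Proof.
move=> HI HS.
have [|A [[HA AS] [IA Amax]]] := @zorn_gen R
  (fun A => is_ideal A /\ forall z, A z -> ~ S z) I 0 (idl0 HI) (conj HI HS).
  move=> F HF [A0 FA0] Ftot; split.
    split; first by exists A0 => //; apply: idl0; case: (HF A0 FA0) => [[]].
    split.
      move=> a b [A FA Aa] [B FB Bb].
      have [[HA _] _] := HF A FA; have [[HB _] _] := HF B FB.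
      case: (Ftot A B FA FB) => [AB | BA].
        by exists B => //; apply: idlD => //; apply: AB.
      by exists A => //; apply: idlD => //; apply: BA.
    move=> r a [A FA Aa]; exists A => //; apply: idlM => //.
    by case: (HF A FA) => [[]].
  by move=> z [A FA Az]; case: (HF A FA) => [[_ H] _]; apply: H.
exists A; split => //; split => //; split => // B HB BS AB.
by apply: Amax.
Qed.

Lemma exists_maximal (I : R -> Prop) : is_ideal I -> ~ I 1 ->
  exists m, maximal m /\ forall z, I z -> m z.
Proof.
move=> HI H1.
have [A [HA [IA [AS Amax]]]] := @zorn_avoid I (fun z => z = 1) HI (fun z Iz E => H1 (eq_ind _ I Iz _ E)).
exists A; split => //; split => //; split; first by move=> /AS; apply.
move=> x Ax; apply: NNPP => Hno.
pose B := fun z => exists r y, A y /\ z = r * x + y.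
have HB : is_ideal B.
  split; first by exists 0, 0; split; [exact: idl0 | rewrite mul0r addr0].
  split.
    move=> a b [r [y [Hy ->]]] [r' [y' [Hy' ->]]]; exists (r + r'), (y + y').
    by split; [exact: idlD | ring].
  move=> c a [r [y [Hy ->]]]; exists (c * r), (c * y).
  by split; [exact: idlM | ring].
apply: Ax; apply: (Amax B HB).
- move=> z [r [y [Hy Ez]]] Ez1; apply: Hno; exists r, y; split => //.
  by rewrite -Ez -Ez1.
- by move=> z Az; exists 0, z; split => //; rewrite mul0r add0r.
- by exists 1, 0; split; [exact: idl0 | rewrite mul1r addr0].
Qed.

Lemma exists_prime_avoid (I S : R -> Prop) : is_ideal I -> (forall z, I z -> ~ S z) ->
  S 1 -> (forall a b, S a -> S b -> S (a * b)) ->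
  exists P, prime_ideal P /\ (forall z, I z -> P z) /\ (forall z, P z -> ~ S z).
Proof.
move=> HI HS S1 Sm.
have [A [HA [IA [AS Amax]]]] := zorn_avoid HI HS.
exists A; split; last by split.
split => //; split; first by move=> /AS; apply.
move=> a b Hab; apply: NNPP => /not_or_and [Ha Hb].
have gen : forall x, ~ A x -> exists r y, A y /\ S (r * x + y).
  move=> x Ax; apply: NNPP => Hno.
  pose B := fun z => exists r y, A y /\ z = r * x + y.
  have HB : is_ideal B.
    split; first by exists 0, 0; split; [exact: idl0 | rewrite mul0r addr0].
    split.
      move=> c d [r [y [Hy ->]]] [r' [y' [Hy' ->]]]; exists (r + r'), (y + y').
      by split; [exact: idlD | ring].
    move=> c d [r [y [Hy ->]]]; exists (c * r), (c * y).
    by split; [exact: idlM | ring].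
  apply: Ax; apply: (Amax B HB).
  - by move=> z [r [y [Hy ->]]] Sz; apply: Hno; exists r, y.
  - by move=> z Az; exists 0, z; split => //; rewrite mul0r add0r.
  - by exists 1, 0; split; [exact: idl0 | rewrite mul1r addr0].
have [r [y [Hy Sy]]] := gen a Ha; have [r' [y' [Hy' Sy']]] := gen b Hb.
apply: (AS _ _ (Sm _ _ Sy Sy')).
have -> : (r * a + y) * (r' * b + y') = (r * r') * (a * b) + (y * (r' * b + y') + r * a * y') by ring.
apply: idlD => //; first exact: idlM.
by apply: idlD => //; [apply: idlMr | apply: idlM].
Qed.

End RingTh.

Section RingTh2.
Variable R : comPzRingType.

Lemma ideal_mul_ideal (I J : R -> Prop) : is_ideal I -> is_ideal (ideal_mul I J).
Proof.
move=> HI; split; first by exists [::]; split => //; rewrite big_nil.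
split.
  move=> a b [s [Hs ->]] [t [Ht ->]]; exists (s ++ t); split; last by rewrite big_cat.
  by move=> p; rewrite mem_cat => /orP [/Hs | /Ht].
move=> r a [s [Hs ->]]; exists [seq (r * p.1, p.2) | p <- s]; split.
  move=> p /mapP [q Hq ->] /=; have [H1 H2] := Hs q Hq; split => //.
  exact: idlM.
by rewrite big_map mulr_sumr; apply: eq_bigr => p _ /=; rewrite mulrA.
Qed.

Lemma ideal_mul1 (I J : R -> Prop) a b : I a -> J b -> ideal_mul I J (a * b).
Proof.
move=> Ha Hb; exists [:: (a, b)]; split; last by rewrite big_seq1.
by move=> p; rewrite mem_seq1 => /eqP ->.
Qed.

Lemma minimal_below (P : R -> Prop) : prime_ideal P ->
  exists Q, minimal_prime Q /\ incl Q P.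
Proof.
move=> HP.
have HP1 : ~ P 1 by case: HP => _ [].
pose Pf := (fun C : R -> Prop => prime_ideal (fun z => ~ C z) /\ forall z, ~ C z -> P z).
have PA0 : Pf (fun z => ~ P z).
  split; last by move=> z; apply: NNPP.
  by apply: (prime_ext _ HP) => z; split => [H|/NNPP].
have Hch : forall F : (R -> Prop) -> Prop, (forall A, F A -> Pf A /\ (forall x, ~ P x -> A x)) ->
     (exists A, F A) -> (forall A B, F A -> F B -> (forall x, A x -> B x) \/ (forall x, B x -> A x)) ->
     Pf (fun x => exists2 A, F A & A x).
  move=> F HF [A0 FA0] Ftot.
  have FP : forall A, F A -> prime_ideal (fun z => ~ A z) by move=> A /HF [[]].
  split; last first.
    by move=> z Hz; have [[_ H] _] := HF A0 FA0; apply: H => Az; apply: Hz; exists A0.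
  split.
    split.
      move=> [A FA A0']; have [[H0 _] _] := FP A FA; exact: H0.
    split.
      move=> a b Ha Hb [A FA Aab]; have [[_ [Hadd _]] _] := FP A FA.
      by apply: (Hadd a b) => // [Aa|Ab]; [apply: Ha | apply: Hb]; exists A.
    move=> r a Ha [A FA Ara]; have [[_ [_ Hm]] _] := FP A FA.
    by apply: (Hm r a) => // Aa; apply: Ha; exists A.
  split.
    move=> H; apply: H; exists A0 => //; have [_ H] := HF A0 FA0; apply: H.
    exact: HP1.
  move=> a b Hab; apply: NNPP => /not_or_and [/NNPP [A FA Aa] /NNPP [B FB Bb]].
  case: (Ftot A B FA FB) => [AB | BA].
    have [_ [_ Hp]] := FP B FB.
    case: (Hp a b) => //; first by move=> Bab; apply: Hab; exists B.
    by move=> /(_ (AB a Aa)).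
  have [_ [_ Hp]] := FP A FA.
  case: (Hp a b) => //; first by move=> Aab; apply: Hab; exists A.
  by move=> /(_ (BA b Bb)).
have [A [[HA AP] [A0A Amax]]] := @zorn_gen R Pf (fun z => ~ P z) 1 HP1 PA0 Hch.
exists (fun z => ~ A z); split; last by move=> z; apply: AP.
split => // Q' HQ' Q'A z Hz.
apply: NNPP => Q'z.
have : A z; last by [].
apply: (Amax (fun z => ~ Q' z)) => //.
- split; first by apply: (prime_ext _ HQ') => w; split => [H|/NNPP].
  move=> w /NNPP /Q'A; exact: AP.
- by move=> w Aw Q'w; apply: (Q'A w Q'w).
Qed.

Hypothesis MR : multiplication_ring R.

Lemma minimal_unique (m P1 P2 : R -> Prop) : is_ideal m -> ~ m 1 ->
  minimal_prime P1 -> minimal_prime P2 -> incl P1 m -> incl P2 m -> same P1 P2.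
Proof.
move=> Hm Hm1 [HP1 M1] [HP2 M2] S1 S2.
case: (classic (incl P1 P2)) => [H12|N12].
  by move=> z; split; [apply: H12 | apply: (M2 P1 HP1 H12)].
case: (classic (incl P2 P1)) => [H21|N21].
  by move=> z; split; [apply: (M1 P2 HP2 H21) | apply: H21].
exfalso.
have [p1 Hp1] := not_all_ex_not _ _ N12; have [Hp1a Hp1b] := imply_to_and _ _ Hp1.
have [p2 Hp2] := not_all_ex_not _ _ N21; have [Hp2a Hp2b] := imply_to_and _ _ Hp2.
have [p [[u Hu] [v Hv]]] := L1 MR p1 p2.
have [[I1 _] [_ Pr1]] := (HP1 : prime_ideal P1).
have [[I2 _] [_ Pr2]] := (HP2 : prime_ideal P2).
have Pp : P1 p.
  have : P1 (p * p2) by rewrite Hu; apply: idlM => //; exact: (proj1 HP1).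
  by case/Pr1 => // /Hp2b [].
have Pq : P2 (1 - p).
  have : P2 ((1 - p) * p1) by rewrite Hv; apply: idlM => //; exact: (proj1 HP2).
  by case/Pr2 => // /Hp1b [].
apply: Hm1; have -> : 1 = p + (1 - p) by rewrite subrKC.
by apply: idlD => //; [apply: S1 | apply: S2].
Qed.

Lemma loc_zero (Q m : R -> Prop) y q : prime_ideal Q -> prime_ideal m -> incl Q m ->
  m y -> ~ Q y -> Q q -> exists u, ~ m u /\ u * q = 0.
Proof.
move=> HQ Hm QM my Qy Qq.
have [[HQi [HQ1 HQp]] [Hmi [Hm1 Hmp]]] := (conj HQ Hm).
have star : forall q', Q q' -> exists s r, ~ m s /\ Q r /\ s * q' = r * y.
  move=> q' Hq'; have [p [[u Hu] [v Hv]]] := L1 MR q' y.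
  case: (classic (m p)) => [mp | nmp]; last first.
    exfalso; have : Q (p * y) by rewrite Hu; exact: idlM.
    by case/HQp => // /QM.
  exists (1 - p), v; split.
    by move=> H; apply: Hm1; rewrite -(subrKC p 1); apply: idlD.
  split => //; have : Q (v * y) by rewrite -Hv; exact: idlM.
  by case/HQp.
have HJ := princ_ideal q.
have [X [HX HS]] := MR HQi HJ (fun z '(ex_intro r Hr) => eq_ind_r Q (idlM r HQi Qq) Hr).
have [ps [Hps Eq]] : ideal_mul X Q q by apply/HS; exact: princ_self.
have [s [c [ms [Hc Ec]]]] : exists s c, ~ m s /\ ideal_mul X Q c /\
    s * (\sum_(p <- ps) p.1 * p.2) = y * c.
  elim: ps Hps {Eq} => [|[xi q'] ps IH] H.
    exists 1, 0; split; first exact: Hm1.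
    split; first exact: idl0 (ideal_mul_ideal _ HX).
    by rewrite big_nil !mulr0.
  have [s' [c' [ms' [Hc' Ec']]]] : exists s c, ~ m s /\ ideal_mul X Q c /\
      s * (\sum_(p <- ps) p.1 * p.2) = y * c.
    by apply: IH => p Hp; apply: H; rewrite in_cons Hp orbT.
  have [Hxi Hq'] : X xi /\ Q q' by apply: (H (xi, q')); rewrite mem_head.
  have [s1 [r [ms1 [Qr Er]]]] := star q' Hq'.
  exists (s1 * s'), (s' * (xi * r) + s1 * c'); split.
    exact: prime_notin_mul.
  split.
    apply: idlD; first exact: ideal_mul_ideal.
      by apply: idlM; [exact: ideal_mul_ideal | exact: ideal_mul1].
    by apply: idlM => //; exact: ideal_mul_ideal.
  rewrite big_cons /=.
  have -> : s1 * s' * (xi * q' + \sum_(p <- ps) p.1 * p.2) =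
     s' * xi * (s1 * q') + s1 * (s' * \sum_(p <- ps) p.1 * p.2) by ring.
  by rewrite Er Ec'; ring.
have [d Ed] : princ q c by apply/HS.
exists (s - y * d); split.
  move=> H; apply: ms; have -> : s = (s - y * d) + y * d by rewrite subrK.
  by apply: idlD => //; exact: idlMr.
by rewrite mulrBl {1}Eq Ec Ed; ring.
Qed.

Lemma loc_nilp (m : R -> Prop) z : minimal_prime m -> m z ->
  exists s E, ~ m s /\ s * z ^+ E = 0.
Proof.
move=> [Hm Hmin] mz; apply: NNPP => Hno.
pose S := fun w : R => exists s k, ~ m s /\ w = s * z ^+ k.
have [Hmi [Hm1 Hmp]] := Hm.
have [|||P [HP [_ PS]]] := @exists_prime_avoid R (fun w => w = 0) S (zero_ideal R).
- move=> w -> [s [k [ms E]]]; apply: Hno; exists s, k; split => //.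
- by exists 1, 0%N; split => //; rewrite expr0 mulr1.
- move=> a b [s [k [ms ->]]] [s' [k' [ms' ->]]]; exists (s * s'), (k + k')%N.
  split; first exact: prime_notin_mul.
  by rewrite exprD; ring.
have PM : incl P m.
  move=> w Pw; apply: NNPP => mw; apply: (PS w Pw).
  by exists w, 0%N; split => //; rewrite expr0 mulr1.
apply: (PS z (Hmin P HP PM z mz)).
by exists 1, 1%N; split => //; rewrite expr1 mul1r.
Qed.

Lemma loc_princ (m : R -> Prop) : maximal m -> minimal_prime m ->
  exists t, m t /\ forall z, m z -> exists s, ~ m s /\ princ t (s * z).
Proof.
move=> Hmax Hmin.
have Hm := maximal_prime Hmax.
have [Hmi [Hm1 Hmp]] := Hm.
have notm1 : forall p, m p -> ~ m (1 - p).
  by move=> p mp H; apply: Hm1; rewrite -(subrKC p 1); apply: idlD.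
apply: NNPP => Hno.
suff Hz : forall x, m x -> exists u, ~ m u /\ u * x = 0.
  apply: Hno; exists 0; split; first exact: idl0.
  move=> z mz; have [u [mu Eu]] := Hz z mz; exists u; split => //.
  by exists 0; rewrite Eu mul0r.
move=> x mx.
have [X [HX HS]] := MR Hmi (princ_ideal x) (fun z '(ex_intro r Hr) => eq_ind_r m (idlM r Hmi mx) Hr).
case: (classic (exists s, X s /\ ~ m s)) => [[s [Xs ms]] | HXm].
  exfalso; apply: Hno; exists x; split => // z mz; exists s; split => //.
  by apply/HS; exact: ideal_mul1.
have [ps [Hps Ex]] : ideal_mul X m x by apply/HS; exact: princ_self.
have [w [s [c [Xw [ms [mc Ec]]]]]] : exists w s c, X w /\ ~ m s /\ m c /\
    s * (\sum_(p <- ps) p.1 * p.2) = w * c.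
  elim: ps Hps {Ex} => [|[xi y] ps IH] H.
    exists 0, 1, 0; split; first exact: idl0.
    by split; [exact: Hm1 | split; [exact: idl0 | rewrite big_nil !mulr0]].
  have [w [s [c [Xw [ms [mc Ec]]]]]] : exists w s c, X w /\ ~ m s /\ m c /\
      s * (\sum_(p <- ps) p.1 * p.2) = w * c.
    by apply: IH => p Hp; apply: H; rewrite in_cons Hp orbT.
  have [Xxi my] : X xi /\ m y by apply: (H (xi, y)); rewrite mem_head.
  have [p [[e He] [e' He']]] := L1 MR w xi.
  rewrite big_cons /=.
  case: (classic (m p)) => [mp | nmp].
    exists xi, (s * (1 - p)), (s * (1 - p) * y + e' * c); split => //.
    split; first by apply: prime_notin_mul => //; exact: notm1.
    split; first by apply: idlD => //; apply: idlM.
    have -> : s * (1 - p) * (xi * y + \sum_(p <- ps) p.1 * p.2) =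
      s * (1 - p) * xi * y + (1 - p) * (s * \sum_(p <- ps) p.1 * p.2) by ring.
    by rewrite Ec mulrA He'; ring.
  exists w, (s * p), (s * e * y + p * c); split => //.
  split; first exact: prime_notin_mul.
  split; first by apply: idlD => //; apply: idlM.
  have -> : s * p * (xi * y + \sum_(p <- ps) p.1 * p.2) =
    s * (p * xi) * y + p * (s * \sum_(p <- ps) p.1 * p.2) by ring.
  by rewrite Ec He; ring.
rewrite -Ex in Ec.
have wz : forall z, m z -> exists d, w * z = d * x.
  by move=> z mz; apply/HS; exact: ideal_mul1.
case: (classic (exists e, w * e = 0 /\ exists p, ~ m p /\ princ e (p * c))) =>
    [[e [we [p [mp [f Ef]]]]] | Hn].
  exists (p * s); split; first exact: prime_notin_mul.
  by rewrite -mulrA Ec mulrCA Ef mulrCA we !mulr0.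
exfalso; apply: Hno; exists c; split => // z mz.
have [d Ed] := wz z mz.
pose e := s * z - d * c.
have we : w * e = 0.
  by rewrite /e mulrBr mulrCA Ed mulrCA Ec; ring.
have [p [[g Eg] [h Eh]]] := L1 MR e c.
case: (classic (m p)) => [mp | nmp]; last first.
  by exfalso; apply: Hn; exists e; split => //; exists p; split => //; exists g.
exists ((1 - p) * s); split; first by apply: prime_notin_mul => //; exact: notm1.
exists (h + (1 - p) * d).
have -> : (1 - p) * s * z = (1 - p) * e + (1 - p) * d * c by rewrite /e; ring.
by rewrite Eh; ring.
Qed.

Lemma max_lemma (P : nat -> Prop) E : P 0%N ->
  exists k, (k <= E)%N /\ P k /\ ((k < E)%N -> ~ P k.+1).
Proof.
move=> P0; elim: E => [|E [k [kE [Pk Hk]]]]; first by exists 0%N.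
case: (ltnP k E) => [kE' | Ek].
  by exists k; split; [exact: ltnW | split => // _; exact: Hk].
have kE2 : k = E by apply/eqP; rewrite eqn_leq kE Ek.
case: (classic (P E.+1)) => [PE | nPE].
  by exists E.+1; split => //; split => //; rewrite ltnn.
by exists k; split; [rewrite kE2 | split => // _; rewrite kE2].
Qed.

Lemma loc_gen (m J : R -> Prop) : maximal m -> minimal_prime m -> is_ideal J -> incl J m ->
  exists a, J a /\ forall j, J j -> exists s, ~ m s /\ princ a (s * j).
Proof.
move=> Hmax Hmin HJ JM.
have Hm := maximal_prime Hmax.
have [Hmi [Hm1 Hmp]] := Hm.
have [t [mt Ht]] := loc_princ Hmax Hmin.
have [s0 [E [ms0 Es0]]] := loc_nilp Hmin mt.
pose lin k j := exists s, ~ m s /\ princ (t ^+ k) (s * j).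
have dich : forall k j, lin k j -> lin k.+1 j \/
    exists s r, ~ m s /\ ~ m r /\ s * j = r * t ^+ k.
  move=> k j [s [ms [r Er]]].
  case: (classic (m r)) => [mr | nmr]; last by right; exists s, r.
  left; have [s' [ms' [r' Er']]] := Ht r mr.
  exists (s' * s); split; first exact: prime_notin_mul.
  by exists r'; rewrite -mulrA Er mulrA Er' exprSr; ring.
have [k [kE [Hk Hk2]]] := @max_lemma (fun k => forall j, J j -> lin k j) E
  (fun j _ => ex_intro _ 1 (conj Hm1 (ex_intro _ j (etrans (mul1r j) (esym (etrans (congr1 _ (expr0 t)) (mulr1 j))))))).
case: (ltnP k E) => [kE' | Ek].
  have [j0 Hj0] := not_all_ex_not _ _ (Hk2 kE'); have [Jj0 nl] := imply_to_and _ _ Hj0.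
  case: (dich k j0 (Hk j0 Jj0)) => [// | [s1 [r1 [ms1 [mr1 E1]]]]].
  exists j0; split => // j Jj.
  have [s [ms [r Er]]] := Hk j Jj.
  exists (r1 * s); split; first exact: prime_notin_mul.
  by exists (r * s1); rewrite -mulrA Er mulrCA -E1 mulrA.
have kE2 : k = E by apply/eqP; rewrite eqn_leq kE Ek.
exists 0; split; first exact: idl0.
move=> j Jj; have [s [ms [r Er]]] := Hk j Jj.
exists (s0 * s); split; first exact: prime_notin_mul.
by exists 0; rewrite mul0r -mulrA Er kE2 mulrCA Es0 mulr0.
Qed.

End RingTh2.

Section RingTh3.
Variable R : comPzRingType.

Lemma maximal_ext (P Q : R -> Prop) : same P Q -> maximal P -> maximal Q.
Proof.
move=> E [[P0 [Pa Pm]] [P1 Px]]; split.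
  split; first exact/E.
  split; first by move=> a b /E Ha /E Hb; apply/E; apply: Pa.
  by move=> r a /E Ha; apply/E; apply: Pm.
split; first by move=> /E.
move=> x Qx; have [r [y [Py Ey]]] := Px x (fun H => Qx (proj1 (E x) H)).
by exists r, y; split => //; apply/E.
Qed.

Lemma minimal_ext (P Q : R -> Prop) : same P Q -> minimal_prime P -> minimal_prime Q.
Proof.
move=> E [HP Hmin]; split; first exact: prime_ext HP.
move=> Q' HQ' Q'Q z /E Pz; apply: (Hmin Q' HQ') => //.
by move=> w /Q'Q /E.
Qed.

Lemma maximal_sub (m m' : R -> Prop) : maximal m -> is_ideal m' -> ~ m' 1 ->
  incl m m' -> incl m' m.
Proof.
move=> [Hm [Hm1 Hmx]] Hm' Hm'1 S z mz; apply: NNPP => nz.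
have [r [y [my Ey]]] := Hmx z nz; apply: Hm'1; rewrite Ey.
by apply: idlD => //; [exact: idlM | exact: S].
Qed.

Lemma prime_notin_exp (P : R -> Prop) x k : prime_ideal P -> ~ P x -> ~ P (x ^+ k).
Proof.
move=> HP Px; elim: k => [|k IH]; first by rewrite expr0; case: HP => _ [].
by rewrite exprS; apply: prime_notin_mul.
Qed.

Lemma loc_glob (A : R -> Prop) w : is_ideal A ->
  (forall m, maximal m -> exists s, ~ m s /\ A (s * w)) -> A w.
Proof.
move=> HA H; pose L := fun r => A (r * w).
have HL : is_ideal L.
  split; first by rewrite /L mul0r; exact: idl0.
  split; first by move=> a b Ha Hb; rewrite /L mulrDl; exact: idlD.
  by move=> r a Ha; rewrite /L -mulrA; exact: idlM.
case: (classic (L 1)) => [L1' | nL1]; first by move: L1'; rewrite /L mul1r.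
have [m [Hm LM]] := exists_maximal HL nL1.
by have [s [ms Ls]] := H m Hm; exfalso; apply: ms; apply: LM.
Qed.

Hypothesis MR : multiplication_ring R.

Lemma fg_mod_prime (P J : R -> Prop) : prime_ideal P -> is_ideal J ->
  exists l, (forall x, x \in l -> J x) /\
    forall z, J z -> exists w, rspan l w /\ P (z - w).
Proof.
move=> HP HJ; have [HPi [HP1 HPp]] := HP.
case: (classic (incl J P)) => [JP | nJP].
  by exists [::]; split => // z Jz; exists 0; split => //; rewrite subr0; apply: JP.
have [a Ha] := not_all_ex_not _ _ nJP; have [Ja Pa] := imply_to_and _ _ Ha.
pose I := fun z => exists j p, J j /\ P p /\ z = j + p.
pose Js := fun z => exists r p, P p /\ z = r * a + p.
have HI : is_ideal I.
  split; first by exists 0, 0; split; [exact: idl0 | split; [exact: idl0 | rewrite addr0]].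
  split.
    move=> u v [j [p [Jj [Pp ->]]]] [j' [p' [Jj' [Pp' ->]]]]; exists (j + j'), (p + p').
    by split; [exact: idlD | split; [exact: idlD | ring]].
  move=> r u [j [p [Jj [Pp ->]]]]; exists (r * j), (r * p).
  by split; [exact: idlM | split; [exact: idlM | ring]].
have HJs : is_ideal Js.
  split; first by exists 0, 0; split; [exact: idl0 | rewrite mul0r addr0].
  split.
    move=> u v [r [p [Pp ->]]] [r' [p' [Pp' ->]]]; exists (r + r'), (p + p').
    by split; [exact: idlD | ring].
  move=> c u [r [p [Pp ->]]]; exists (c * r), (c * p).
  by split; [exact: idlM | ring].
have JsI : incl Js I.
  move=> u [r [p [Pp ->]]]; exists (r * a), p; split; last by [].
  exact: idlM.
have [X [HX HS]] := MR HI HJs JsI.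
have [ps [Hps Ea]] : ideal_mul X I a.
  by apply/HS; exists 1, 0; split; [exact: idl0 | rewrite mul1r addr0].
have [l [Hl Hw]] : exists l, (forall x, x \in l -> J x) /\
    forall z, J z -> exists w, rspan l w /\ P (z * \sum_(p <- ps) p.1 * p.2 - a * w).
  elim: ps Hps {Ea} => [|[xi y] ps IH] H.
    exists [::]; split => // z Jz; exists 0; split => //.
    by rewrite big_nil !mulr0 subr0; exact: idl0.
  have [l [Hl Hw]] : exists l, (forall x, x \in l -> J x) /\
      forall z, J z -> exists w, rspan l w /\ P (z * \sum_(p <- ps) p.1 * p.2 - a * w).
    by apply: IH => p Hp; apply: H; rewrite in_cons Hp orbT.
  have [Xxi [j [p [Jj [Pp Ey]]]]] : X xi /\ I y by apply: (H (xi, y)); rewrite mem_head.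
  exists (j :: l); split.
    by move=> u; rewrite in_cons => /orP [/eqP -> | /Hl].
  move=> z Jz; have [w [Hw1 Hw2]] := Hw z Jz.
  have [c [p' [Pp' Ec]]] : Js (z * xi).
    apply/HS; rewrite mulrC; apply: ideal_mul1 => //.
    by exists z, 0; split => //; split; [exact: idl0 | rewrite addr0].
  exists (c * j + w); split.
    by exists c; rewrite /= addrC addKr.
  rewrite big_cons /= Ey.
  have -> : z * (xi * (j + p) + \sum_(p0 <- ps) p0.1 * p0.2) - a * (c * j + w) =
    (z * xi) * (j + p) - a * c * j + (z * \sum_(p0 <- ps) p0.1 * p0.2 - a * w) by ring.
  rewrite Ec.
  have -> : (c * a + p') * (j + p) - a * c * j = c * a * p + p' * (j + p) by ring.
  apply: idlD => //; apply: idlD => //; first exact: idlM.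
  exact: idlMr.
exists l; split => // z Jz; have [w [Hw1 Hw2]] := Hw z Jz.
exists w; split => //.
have : P (a * (z - w)).
  have -> : a * (z - w) = z * a - a * w by ring.
  by rewrite {1}Ea.
by case/HPp => // /Pa.
Qed.

Variable n : nat.
Variable Q : nat -> R -> Prop.
Hypothesis HQ : forall P, minimal_prime P -> exists2 i, (i < n)%N & same P (Q i).

Definition Nk k := fun z : R => forall i, (i < k)%N -> minimal_prime (Q i) -> Q i z.

Lemma Nk_ideal k : is_ideal (Nk k).
Proof.
split; first by move=> i _ [[[H0 _] _] _].
split; first by move=> a b Ha Hb i ik Hi; apply: idlD; [exact: (proj1 (proj1 Hi)) | exact: Ha | exact: Hb].
by move=> r a Ha i ik Hi; apply: idlM; [exact: (proj1 (proj1 Hi)) | exact: Ha].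
Qed.

Lemma fg_mod_N (J : R -> Prop) k : is_ideal J ->
  exists l, (forall x, x \in l -> J x) /\
    forall z, J z -> exists w, rspan l w /\ Nk k (z - w).
Proof.
move=> HJ; elim: k => [|k [l1 [Hl1 Hw1]]].
  by exists [::]; split => // z Jz; exists 0; split => // i.
case: (classic (minimal_prime (Q k))) => [Hk | nHk]; last first.
  exists l1; split => // z Jz; have [w [Hw Nw]] := Hw1 z Jz.
  exists w; split => // i; rewrite ltnS leq_eqVlt => /orP [/eqP -> // | ik].
  exact: Nw.
have [l2 [Hl2 Hw2]] := fg_mod_prime (proj1 Hk) HJ.
exists (l1 ++ l2); split.
  by move=> x; rewrite mem_cat => /orP [/Hl1 | /Hl2].
move=> z Jz; have [w1 [Sw1 Nw1]] := Hw1 z Jz; have [w2 [Sw2 Qw2]] := Hw2 z Jz.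
have Hsp := rspan_ideal (l1 ++ l2).
have f0sp : rspan (l1 ++ l2) (w2 - w1).
  by apply: idlB => //; [exact: rspan_catr | exact: rspan_catl].
have [p [[u Hu] [v Hv]]] := L1 MR (w2 - w1) (z - w2).
exists (w1 + p * (z - w1)); split.
  apply: idlD => //; first exact: rspan_catl.
  have -> : p * (z - w1) = p * (w2 - w1) + p * (z - w2) by ring.
  rewrite Hu; apply: idlD => //; exact: idlM.
have -> : z - (w1 + p * (z - w1)) = (1 - p) * (z - w1) by ring.
move=> i; rewrite ltnS leq_eqVlt => /orP [/eqP -> | ik] Hi.
  have -> : (1 - p) * (z - w1) = (1 - p) * (w2 - w1) + (1 - p) * (z - w2) by ring.
  rewrite Hv; have HQk := proj1 (proj1 Hk).
  by apply: idlD => //; apply: idlM.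
by apply: idlM; [exact: (proj1 (proj1 Hi)) | exact: Nw1].
Qed.

Lemma fg_nil (J : R -> Prop) : is_ideal J -> incl J (Nk n) ->
  exists l, (forall x, x \in l -> J x) /\ forall z, J z -> rspan l z.
Proof.
move=> HJ JN.
pose K := fun r => exists l, (forall x, x \in l -> J x) /\ forall z, J z -> rspan l (r * z).
have HK : is_ideal K.
  split; first by exists [::]; split => // z _; rewrite mul0r.
  split.
    move=> a b [l1 [H1 E1]] [l2 [H2 E2]]; exists (l1 ++ l2); split.
      by move=> x; rewrite mem_cat => /orP [/H1 | /H2].
    move=> z Jz; rewrite mulrDl; apply: idlD; first exact: rspan_ideal.
      by apply: rspan_catl; apply: E1.
    by apply: rspan_catr; apply: E2.
  move=> r a [l [H1 E1]]; exists l; split => // z Jz; rewrite -mulrA.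
  by apply: idlM; [exact: rspan_ideal | exact: E1].
case: (classic (K 1)) => [[l [Hl El]] | nK1].
  by exists l; split => // z Jz; rewrite -(mul1r z); apply: El.
exfalso.
have [m [Hmax KM]] := exists_maximal HK nK1.
have Hm := maximal_prime Hmax.
have [Hmi [Hm1 Hmp]] := Hm.
have [Q0 [HQ0 Q0m]] := minimal_below Hm.
have [i0 i0n EQ0] := HQ HQ0.
have HQi0 : minimal_prime (Q i0) := minimal_ext EQ0 HQ0.
have [x [mx Hx]] : exists x, ~ m x /\ forall i, (i < n)%N -> minimal_prime (Q i) ->
    ~ same (Q i) Q0 -> Q i x.
  suff : forall k, exists x, ~ m x /\ forall i, (i < k)%N -> minimal_prime (Q i) ->
    ~ same (Q i) Q0 -> Q i x.
    by move=> /(_ n).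
  elim => [|k [x [mx Hx]]]; first by exists 1; split => // i.
  case: (classic (minimal_prime (Q k) /\ ~ same (Q k) Q0)) => [[Hk Nk0] | nk].
    have nI : ~ incl (Q k) m.
      move=> S; apply: Nk0; apply: (minimal_unique MR Hmi Hm1 Hk HQ0 S Q0m).
    have [xk Hxk] := not_all_ex_not _ _ nI; have [Qxk mxk] := imply_to_and _ _ Hxk.
    exists (x * xk); split; first exact: prime_notin_mul.
    move=> i; rewrite ltnS leq_eqVlt => /orP [/eqP -> | ik] Hi Ni.
      by apply: idlM => //; exact: (proj1 (proj1 Hk)).
    by apply: idlMr; [exact: (proj1 (proj1 Hi)) | exact: Hx].
  exists x; split => // i; rewrite ltnS leq_eqVlt => /orP [/eqP -> | ik] Hi Ni.
    by exfalso; apply: nk.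
  exact: Hx.
have [E HE] : exists E, forall i, (i < n)%N -> minimal_prime (Q i) ->
    ~ same (Q i) Q0 -> maximal (Q i) -> exists s, ~ Q i s /\ s * x ^+ E = 0.
  suff : forall k, (k <= n)%N -> exists E, forall i, (i < k)%N -> minimal_prime (Q i) ->
    ~ same (Q i) Q0 -> maximal (Q i) -> exists s, ~ Q i s /\ s * x ^+ E = 0.
    by move=> /(_ n (leqnn n)).
  elim => [|k IH] kn; first by exists 0%N.
  have [E HE] := IH (ltnW kn).
  case: (classic (minimal_prime (Q k) /\ ~ same (Q k) Q0 /\ maximal (Q k)))
    => [[Hk [Nk0 Mk]] | nk].
    have [s [Ek [sQ Es]]] := loc_nilp Hk (Hx k kn Hk Nk0).
    exists (E + Ek)%N => i; rewrite ltnS leq_eqVlt => /orP [/eqP -> | ik] Hi Ni Mi.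
      by exists s; split => //; rewrite exprD mulrCA Es mulr0.
    have [s' [sQ' Es']] := HE i ik Hi Ni Mi.
    by exists s'; split => //; rewrite exprD mulrA Es' mul0r.
  exists E => i; rewrite ltnS leq_eqVlt => /orP [/eqP -> | ik] Hi Ni Mi.
    by exfalso; apply: nk.
  exact: HE.
pose y0 := x ^+ E.+1.
have my0 : ~ m y0 by apply: prime_notin_exp.
have Qmin : forall m', maximal m' -> exists j, (j < n)%N /\ minimal_prime (Q j) /\ incl (Q j) m'.
  move=> m' Hm'; have [Q' [HQ' Q'm']] := minimal_below (maximal_prime Hm').
  have [j jn Ej] := HQ HQ'; exists j; split => //; split; first exact: minimal_ext Ej HQ'.
  by move=> z /Ej /Q'm'.
have other : forall m' j, maximal m' -> (j < n)%N -> minimal_prime (Q j) -> incl (Q j) m' ->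
    ~ same (Q j) Q0 -> exists u, ~ m' u /\ u * y0 = 0.
  move=> m' j Hm' jn Hj jm' Nj.
  have Qx := Hx j jn Hj Nj.
  case: (classic (incl m' (Q j))) => [m'Q | nm'Q].
    have Mj : maximal (Q j).
      by apply: (maximal_ext _ Hm') => z; split; [apply: m'Q | apply: jm'].
    have [s [sQ Es]] := HE j jn Hj Nj Mj.
    exists s; split; first by move=> /m'Q.
    by rewrite /y0 exprSr mulrA Es mul0r.
  have [y Hy] := not_all_ex_not _ _ nm'Q; have [m'y Qy] := imply_to_and _ _ Hy.
  have [u [mu Eu]] := loc_zero MR (proj1 Hj) (maximal_prime Hm') jm' m'y Qy Qx.
  by exists u; split => //; rewrite /y0 exprS mulrA Eu mul0r.
have JQ0 : incl J Q0 by move=> z /JN /(_ i0 i0n HQi0) /EQ0.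
apply: my0; apply: KM.
case: (classic (exists y, m y /\ ~ Q0 y)) => [[y [my Qy]] | nex].
  exists [::]; split => // z Jz; apply: (loc_glob (zero_ideal R)) => m' Hm'.
  have [j [jn [Hj jm']]] := Qmin m' Hm'.
  case: (classic (same (Q j) Q0)) => [Ej | Nj]; last first.
    have [u [mu Eu]] := other m' j Hm' jn Hj jm' Nj.
    by exists u; split => //; rewrite mulrA Eu mul0r.
  have Q0m' : incl Q0 m' by move=> w /Ej /jm'.
  have nm'Q0 : ~ incl m' Q0.
    move=> Sm; apply: Qy; apply: (Sm).
    by apply: (maximal_sub Hm' Hmi Hm1) => // w /Sm /Q0m.
  have [y' Hy'] := not_all_ex_not _ _ nm'Q0; have [m'y' Qy'] := imply_to_and _ _ Hy'.
  have [u [mu Eu]] := loc_zero MR (proj1 HQ0) (maximal_prime Hm') Q0m' m'y' Qy' (JQ0 z Jz).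
  by exists u; split => //; rewrite mulrCA Eu mulr0.
have mQ0 : incl m Q0.
  by move=> w mw; apply: NNPP => Qw; apply: nex; exists w.
have Emin : minimal_prime m.
  by apply: (minimal_ext _ HQ0) => w; split; [apply: Q0m | apply: mQ0].
have [a [Ja Ha]] := loc_gen MR Hmax Emin HJ (fun z Jz => Q0m z (JQ0 z Jz)).
exists [:: a]; split; first by move=> w; rewrite mem_seq1 => /eqP ->.
move=> z Jz; apply/rspan1; apply: (loc_glob (princ_ideal a)) => m' Hm'.
have [j [jn [Hj jm']]] := Qmin m' Hm'.
case: (classic (same (Q j) Q0)) => [Ej | Nj]; last first.
  have [u [mu Eu]] := other m' j Hm' jn Hj jm' Nj.
  by exists u; split => //; exists 0; rewrite mulrA Eu !mul0r.
have mm' : incl m m' by move=> w /mQ0 /Ej /jm'.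
have m'm : incl m' m by have [Hm'i [Hm'1 _]] := Hm'; apply: maximal_sub.
have [s [ms [r Er]]] := Ha z Jz.
exists s; split; first by move=> /m'm.
by exists (y0 * r); rewrite mulrCA Er mulrA.
Qed.

Lemma fg_all (J : R -> Prop) : is_ideal J ->
  exists l, (forall x, x \in l -> J x) /\ forall z, J z -> rspan l z.
Proof.
move=> HJ.
have [l1 [Hl1 Hw1]] := fg_mod_N n HJ.
pose J' := fun z => J z /\ Nk n z.
have HJ' : is_ideal J'.
  have [N0 [Na Nm]] := Nk_ideal n.
  split; first by split; [exact: idl0 | exact: N0].
  split; first by move=> a b [Ja Na'] [Jb Nb]; split; [exact: idlD | exact: Na].
  by move=> r a [Ja Na']; split; [exact: idlM | exact: Nm].
have [l2 [Hl2 Hw2]] := fg_nil HJ' (fun z => @proj2 _ _).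
exists (l1 ++ l2); split.
  by move=> x; rewrite mem_cat => /orP [/Hl1 | /Hl2 []].
move=> z Jz; have [w [Sw Nw]] := Hw1 z Jz.
have -> : z = w + (z - w) by rewrite addrC subrK.
apply: idlD; first exact: rspan_ideal.
  exact: rspan_catl.
apply: rspan_catr; apply: Hw2; split => //.
apply: idlB => //; apply: (rspan_sub HJ Hl1); exact: Sw.
Qed.


End RingTh3.

Lemma chain_mono' (T : Type) (N : nat -> T -> Prop) :
  (forall n, incl (N n) (N n.+1)) -> forall k n, (k <= n)%N -> incl (N k) (N n).
Proof.
move=> H k n'; elim: n' => [|n' IH]; first by rewrite leqn0 => /eqP ->.
rewrite leq_eqVlt => /orP [/eqP -> // | Hk] x Hx.
by apply: H; apply: IH.
Qed.

Lemma mult_ring_acc_aux (R : comPzRingType) : multiplication_ring R ->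
  finitely_many_minimal_primes R ->
  forall I : nat -> R -> Prop, (forall n, is_ideal (I n)) ->
    (forall n, incl (I n) (I n.+1)) ->
    exists k, forall n, (k <= n)%N -> same (I n) (I k).
Proof.
move=> MR [n [Q HQ]] I HI Hinc.
have mono := chain_mono' Hinc.
pose J := fun z => exists k, I k z.
have HJ : is_ideal J.
  split; first by exists 0%N; exact: idl0.
  split.
    move=> a b [k1 H1] [k2 H2]; exists (maxn k1 k2); apply: idlD => //.
      by apply: (mono k1) => //; rewrite leq_maxl.
    by apply: (mono k2) => //; rewrite leq_maxr.
  by move=> r a [k Hk]; exists k; apply: idlM.
have [l [Hl Hsp]] := fg_all MR HQ HJ.
have [k Hk] : exists k, forall x, x \in l -> I k x.
  elim: l Hl {Hsp} => [|y l IH] H; first by exists 0%N.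
  have [k Hk] : exists k, forall x, x \in l -> I k x.
    by apply: IH => x Hx; apply: H; rewrite in_cons Hx orbT.
  have [k' Hk'] : J y by apply: H; rewrite mem_head.
  exists (maxn k k') => x; rewrite in_cons => /orP [/eqP -> | Hx].
    by apply: (mono k') => //; rewrite leq_maxr.
  by apply: (mono k) => //; [rewrite leq_maxl | apply: Hk].
exists k => n' kn z; split; last by apply: mono.
move=> Hz; apply: (rspan_sub (HI k) Hk); apply: Hsp; by exists n'.
Qed.

Definition ring_acc (R : comPzRingType) : Prop :=
  forall I : nat -> R -> Prop, (forall n, is_ideal (I n)) ->
    (forall n, incl (I n) (I n.+1)) ->
    exists k, forall n, (k <= n)%N -> same (I n) (I k).

Lemma mult_ring_acc (R : comPzRingType) :
  multiplication_ring R -> finitely_many_minimal_primes R -> ring_acc R.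
Proof. exact: mult_ring_acc_aux. Qed.

Lemma chain_mono (T : Type) (N : nat -> T -> Prop) :
  (forall n, incl (N n) (N n.+1)) -> forall k n, (k <= n)%N -> incl (N k) (N n).
Proof.
move=> H k n; elim: n => [|n IH]; first by rewrite leqn0 => /eqP ->.
rewrite leq_eqVlt => /orP [/eqP -> // | Hk] x Hx.
by apply: H; apply: IH.
Qed.

Lemma mult_noeth (R : comPzRingType) (M : lmodType R) :
  ring_acc R -> multiplication_module M -> noetherian_mod M.
Proof.
move=> Hacc MM N HN Hinc.
have [k Hk] := Hacc (fun n => colon (N n)) (fun n => colon_ideal (HN n))
  (fun n r Hr m => Hinc n _ (Hr m)).
exists k => n Hkn m; split; last by apply: chain_mono.
move=> Hm.
have [I [HI HIs]] := MM _ (HN n).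
apply: (@ideal_smul_sub _ _ (N k) (colon (N k)) (HN k)); first by [].
have [s [Hs ->]] := proj1 (HIs m) Hm.
exists s; split => // p Hp.
apply/(Hk n Hkn); apply: (mult_sub_colon (HN n) HIs); exact: Hs.
Qed.

Theorem theorem1p5 (R : comPzRingType) (M : lmodType R) :
  multiplication_ring R -> finitely_many_minimal_primes R ->
  ((faithful_mod M /\ noetherian_mod M /\ distributive_mod M) <->
   (faithful_mod M /\ multiplication_module M)).
Proof.
move=> MR FM; split.
  move=> [F [Nt D]]; split => //.
  apply: steph_mult; first exact: steph.
  exact: noeth_fg.
move=> [F MM]; split => //; split.
  exact: mult_noeth (mult_ring_acc MR FM) MM.
apply: steph_distr; exact: steph_of_mult.
Qed.
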